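(* Let $m\geqslant3$, $\alpha=2\uparrow\uparrow(m-1)$, and let $n$ be a natural number with $n<3^\alpha$. Then $H(n)=m$ if and only if $n=2^\alpha a$ with $a$ odd and $a<1.5^\alpha$. Moreover, if $n$ is not of the form $2^\alpha a$ with $a$ odd, then $H(n)\leqslant m-1$.
   Context: $H(n)$ is the height of the factorization tree of $n\geqslant1$: $H(1)=0$ and, for $n=p_1^{\alpha_1}\cdots p_k^{\alpha_k}>1$ with distinct primes $p_i$, $H(n)=1+\max_i H(\alpha_i)$. Tetration: $a\uparrow\uparrow0=1$, $a\uparrow\uparrow b=a^{a\uparrow\uparrow(b-1)}$. *)

(* Defs.v *)
From mathcomp Require Import all_boot.
Set Implicit Arguments. Unset Strict Implicit. Unset Printing Implicit Defensive.

(* Height of the factorization tree, computed with fuel.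
   prime_decomp n = [:: (p_1, a_1); ...; (p_k, a_k)] for n > 1, [::] for n <= 1.
   H(1) = 0 and H(n) = 1 + max_i H(a_i); since a_i < n, fuel n suffices. *)
Fixpoint Hfuel (fuel n : nat) : nat :=
  match fuel with
  | 0 => 0
  | f.+1 =>
      if n <= 1 then 0
      else (foldr maxn 0 [seq Hfuel f pe.2 | pe <- prime_decomp n]).+1
  end.

Definition H (n : nat) : nat := Hfuel n n.

Fixpoint tetr (a b : nat) : nat :=
  match b with
  | 0 => 1
  | b'.+1 => a ^ tetr a b'
  end.

(* Main.v *)
Require Import Defs.
From mathcomp Require Import all_boot.
From mathcomp Require Import zify.

Lemma logn_lt p n : 0 < n -> logn p n < n.
Proof.
move=> n0.
case: (posnP (logn p n)) => [->//|lg].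
have := lg; rewrite logn_gt0 mem_primes => /and3P[pp _ _].
apply: (leq_trans (ltn_expl (logn p n) (isT : 1 < 2))).
apply: (leq_trans _ (dvdn_leq n0 (pfactor_dvdnn p n))).
by rewrite leq_exp2r // prime_gt1.
Qed.

Lemma Hfuel_stable f1 f2 n : n <= f1 -> n <= f2 -> Hfuel f1 n = Hfuel f2 n.
Proof.
elim: f1 f2 n => [|f1 IH] [|f2] n /=.
- by [].
- by rewrite leqn0 => /eqP ->.
- by move=> _; rewrite leqn0 => /eqP ->.
- move=> h1 h2; case: ifP => // n1; congr (_.+1); congr foldr.
  rewrite prime_decompE; apply/eq_in_map => pe /mapP[p _ ->] /=.
  have n0 : 0 < n by lia.
  have := @logn_lt p n n0 => lt.
  apply: IH; lia.
Qed.

Lemma HE n : 1 < n ->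
  H n = (foldr maxn 0 [seq H (logn p n) | p <- primes n]).+1.
Proof.
move=> n1; rewrite /H; case: n n1 => [//|n'] n1 /=.
rewrite ifN; last by rewrite -ltnNge.
congr (_.+1); congr foldr.
rewrite prime_decompE -map_comp; apply/eq_in_map => p _ /=.
have := @logn_lt p n'.+1 isT => lt.
apply: Hfuel_stable; lia.
Qed.

Lemma H_small n : n <= 1 -> H n = 0.
Proof. by case: n => [|[|]]. Qed.

Lemma foldr_max_gt j s : (j < foldr maxn 0 s) = has (fun x => j < x) s.
Proof. by elim: s => //= x s IH; rewrite leq_max IH. Qed.

Lemma foldr_max_le j s : (foldr maxn 0 s <= j) = all (fun x => x <= j) s.
Proof. by elim: s => //= x s IH; rewrite geq_max IH. Qed.

Lemma H_gt n j : 1 < n -> (j.+1 < H n) = has (fun p => j < H (logn p n)) (primes n).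
Proof. by move=> n1; rewrite HE // ltnS foldr_max_gt has_map. Qed.

Lemma H_le n j : 1 < n -> (H n <= j.+1) = all (fun p => H (logn p n) <= j) (primes n).
Proof. by move=> n1; rewrite HE // ltnS foldr_max_le all_map. Qed.

Lemma H_pos n : 0 < H n -> 1 < n.
Proof. by case: (leqP n 1) => // /H_small ->. Qed.

Lemma lemA j n : 0 < n -> j <= H n -> tetr 2 j <= n.
Proof.
elim: j n => [//|j IH] n n0 hj.
have n1 : 1 < n by apply: H_pos; exact: leq_trans hj.
case: j IH hj => [|j] IH hj; first by [].
have /hasP[p pn hp] : has (fun p => j < H (logn p n)) (primes n) by rewrite -H_gt.
have lg : 0 < logn p n by rewrite logn_gt0.
have := IH _ lg hp => /= le1.
move: pn; rewrite mem_primes => /and3P[pp _ _].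
apply: (leq_trans (leq_pexp2l (isT : 0 < 2) le1)).
apply: (leq_trans _ (dvdn_leq n0 (pfactor_dvdnn p n))).
by rewrite leq_exp2r // prime_gt1.
Qed.

Lemma tetr_pos j : 0 < tetr 2 j.
Proof. by case: j => //= j; rewrite expn_gt0. Qed.

Lemma lemB j : H (tetr 2 j) = j.
Proof.
elim: j => [//|j IH] /=.
have t0 := tetr_pos j.
have n1 : 1 < 2 ^ tetr 2 j by rewrite -{1}(expn0 2) ltn_exp2l.
rewrite HE // primesX // primes_prime //= pfactorK // IH.
by rewrite maxn0.
Qed.

Lemma tetr_ge2 k : 0 < k -> 2 <= tetr 2 k.
Proof.
case: k => // k _ /=; have := tetr_pos k.
by case: (tetr 2 k) => // t _; rewrite expnS; have := expn_gt0 2 t; lia.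
Qed.

Lemma pow23 b : 2 <= b -> 2 * 2 ^ b <= 3 ^ b.
Proof.
elim: b => // b IH; rewrite leq_eqVlt => /orP[/eqP <-//|].
rewrite ltnS => /IH h; rewrite !expnS; lia.
Qed.

Lemma lemM k j n : 0 < k -> k <= j -> 0 < n -> n < 3 ^ tetr 2 k ->
  j.+1 <= H n -> j <= H (logn 2 n) /\ tetr 2 k <= logn 2 n.
Proof.
move=> k0 kj n0 nlt hj.
have n1 : 1 < n by apply: H_pos; exact: leq_trans hj.
case: j kj hj => [|j] kj hj; first by move: kj; rewrite leqn0 => /eqP k00; rewrite k00 in k0.
have /hasP[p pn hp] : has (fun p => j < H (logn p n)) (primes n) by rewrite -H_gt.
have lg : 0 < logn p n by rewrite logn_gt0.
have bf := @lemA _ _ lg (leq_trans kj hp).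
have := pn; rewrite mem_primes => /and3P[pp _ _].
have [p2|p2] := eqVneq p 2; first by subst p.
exfalso.
have p3 : 3 <= p by have := prime_gt1 pp; move: p2; clear; case: p => [|[|[|]]].
have : 3 ^ tetr 2 k <= n; last by rewrite leqNgt nlt.
apply: (leq_trans (leq_pexp2l (isT : 0 < 3) bf)).
apply: (leq_trans _ (dvdn_leq n0 (pfactor_dvdnn p n))).
by rewrite leq_exp2r.
Qed.

Lemma lemC k e : 0 < k -> e < 2 * 2 ^ tetr 2 k -> k.+1 <= H e -> e = 2 ^ tetr 2 k.
Proof.
move=> k0 elt he.
have e0 : 0 < e by have := @H_pos _ (leq_trans (isT : 0 < k.+1) he); lia.
have b2 := @tetr_ge2 _ k0.
have e3 : e < 3 ^ tetr 2 k := leq_trans elt (@pow23 _ b2).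
have [_ bf] := @lemM _ _ _ k0 (leqnn k) e0 e3 he.
have fb : logn 2 e <= tetr 2 k.
  have : 2 ^ logn 2 e < 2 ^ (tetr 2 k).+1.
    by apply: leq_ltn_trans (dvdn_leq e0 (pfactor_dvdnn 2 e)) _; rewrite expnS.
  by rewrite ltn_exp2l.
have : 2 ^ tetr 2 k %| e by rewrite pfactor_dvdn.
case/dvdnP => q eq.
have := expn_gt0 2 (tetr 2 k); rewrite eq in elt e0 *; move: elt e0.
set X := 2 ^ tetr 2 k => elt e0 X0.
have : q = 1 by nia.
by move ->; rewrite mul1n.
Qed.

Lemma logn2_form n al : 0 < n ->
  (logn 2 n = al) <-> exists a, n = 2 ^ al * a /\ odd a.
Proof.
move=> n0; split.
  move=> <-; have [a ca na] := pfactor_coprime (isT : prime 2) n0.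
  by exists a; rewrite {1}na mulnC -coprime2n.
case=> a [na oa]; have a0 : 0 < a by case: a oa {na}.
rewrite na lognM ?expn_gt0 // pfactorK // logn_coprime ?coprime2n //.
by rewrite addn0.
Qed.

Theorem lemma3 (m n : nat) :
  3 <= m -> 1 <= n -> n < 3 ^ tetr 2 m.-1 ->
  (H n = m <->
     exists a, n = 2 ^ tetr 2 m.-1 * a /\ odd a /\ 2 ^ tetr 2 m.-1 * a < 3 ^ tetr 2 m.-1)
  /\
  ((~ exists a, n = 2 ^ tetr 2 m.-1 * a /\ odd a) -> H n <= m.-1).
Proof.
move=> m3 n0 nlt.
have [k mk] : exists k, m = k.+2 by exists m.-2; lia.
subst m; have k0 : 0 < k by lia.
have ek : k.+2.-1 = k.+1 by []. rewrite ek in nlt *.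
set al := tetr 2 k.+1 in nlt *.
have alE : al = 2 ^ tetr 2 k by [].
have flt : forall f, 2 ^ f <= n -> f < 2 * 2 ^ tetr 2 k.
  move=> f hf; rewrite -alE.
  have : 2 ^ f < 2 ^ (2 * al).
    apply: (leq_ltn_trans hf); apply: (leq_trans nlt).
    rewrite expnM; case: (posnP al) => [->//|a0].
    by rewrite leq_exp2r.
  by rewrite ltn_exp2l.
have f2 : 2 ^ logn 2 n <= n := dvdn_leq n0 (pfactor_dvdnn 2 n).
have Hle : H n <= k.+2.
  rewrite leqNgt; apply/negP => h.
  have [h1 h2] := @lemM k.+1 k.+2 n isT (leqnSn _) n0 nlt h.
  have := @lemC k (logn 2 n) k0 (flt _ f2) (leq_trans (leqnSn _) h1).
  move=> e; rewrite e -alE lemB in h1; by rewrite ltnn in h1.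
have Hto : H n = k.+2 -> logn 2 n = al.
  move=> h.
  have [h1 h2] := @lemM k.+1 k.+1 n isT (leqnn _) n0 nlt (eq_leq (esym h)).
  by rewrite alE; apply: lemC k0 (flt _ f2) h1.
have Hfrom : logn 2 n = al -> H n = k.+2.
  move=> e; apply/eqP; rewrite eqn_leq Hle /=.
  have lg : 0 < logn 2 n by rewrite e /al tetr_pos.
  have pn := lg; rewrite logn_gt0 in pn.
  have n1 : 1 < n.
    by move: pn; rewrite mem_primes => /and3P[_ _ d]; move: (dvdn_leq n0 d).
  rewrite H_gt //; apply/hasP; exists 2 => //.
  by rewrite e /al lemB.
split; last first.
  move=> nf; have : H n != k.+2.
    by apply/negP => /eqP /Hto /(@logn2_form n al n0).
  by move=> ne; move: Hle ne; lia.
split.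
  by move/Hto/(@logn2_form n al n0) => [a [na oa]]; exists a; rewrite -na.
case=> a [na [oa _]]; apply: Hfrom; apply/(@logn2_form n al n0); by exists a.
Qed.
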